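(* Let $\sigma\in\{1,-1\}$, let $U$ be an open subset of the Weyl upper half-plane, and let $\varphi:U\to\mathbb{C}$ be a $C^\infty$ function of the form $$\varphi(\rho,v)=\frac{-\sigma(\omega-v)\pm\sqrt{(\omega-v)^2+\sigma\rho^2}}{\rho}$$ for a fixed $\omega\in\mathbb{C}$ and a fixed continuous branch of the square root on $U$, with $\varphi\neq0$ and $\varphi^2+\sigma\neq0$ on $U$. Let $M$ be an invertible $n\times n$ matrix function on $U$ of class $C^2$ and let $A=M^{-1}dM$. Suppose there is an invertible $n\times n$ matrix function $X$ on $U$ of class $C^2$, with $X^{-1}$ of class $C^1$, satisfying the Breitenlohner–Maison linear system $$\varphi\,(dX+AX)=\star\, dX\quad\text{on }U.$$ Then $A$ satisfies the field equations $$d(\rho\,\star A)=0\quad\text{on }U.$$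
   Context: The Weyl upper half-plane is $\{(\rho,v)\in\mathbb{R}^2:\rho>0\}$. The Hodge star $\star$ acts on one-forms in $(\rho,v)$ (entrywise on matrix-valued one-forms, linearly over functions) by $\star d\rho=-\sigma\,dv$, $\star dv=d\rho$; $d$ is the exterior derivative in $(\rho,v)$. *)

(* Defs.v *)
From Stdlib Require Import Reals.
Open Scope R_scope.

Definition Cx : Type := (R * R)%type.
Definition Cre (z : Cx) : R := fst z.
Definition Cim (z : Cx) : R := snd z.
Definition RtoC (x : R) : Cx := (x, 0).
Definition C0 : Cx := (0, 0).
Definition Cadd (z w : Cx) : Cx := (fst z + fst w, snd z + snd w).
Definition Copp (z : Cx) : Cx := (- fst z, - snd z).
Definition Csub (z w : Cx) : Cx := Cadd z (Copp w).
Definition Cmul (z w : Cx) : Cx :=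
  (fst z * fst w - snd z * snd w, fst z * snd w + snd z * fst w).
Definition Csq (z : Cx) : Cx := Cmul z z.
Definition Cscal (a : R) (z : Cx) : Cx := (a * fst z, a * snd z).

(* ---------- n x n complex matrices (entries outside 0..n-1 are ignored) ---------- *)
Definition Mat : Type := nat -> nat -> Cx.
Fixpoint Csum (k : nat) (f : nat -> Cx) : Cx :=
  match k with O => C0 | S k' => Cadd (Csum k' f) (f k') end.
Definition mat_mul (n : nat) (A B : Mat) : Mat :=
  fun i j => Csum n (fun k => Cmul (A i k) (B k j)).
Definition mat_add (A B : Mat) : Mat := fun i j => Cadd (A i j) (B i j).
Definition mat_sub (A B : Mat) : Mat := fun i j => Csub (A i j) (B i j).
Definition mat_cscale (c : Cx) (A : Mat) : Mat := fun i j => Cmul c (A i j).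
Definition mat_rscale (a : R) (A : Mat) : Mat := fun i j => Cscal a (A i j).
Definition mat_id : Mat := fun i j => if Nat.eqb i j then RtoC 1 else C0.
Definition mat_zero : Mat := fun _ _ => C0.
Definition mat_eq (n : nat) (A B : Mat) : Prop :=
  forall i j, (i < n)%nat -> (j < n)%nat -> A i j = B i j.
Definition mat_inverse (n : nat) (A B : Mat) : Prop :=
  mat_eq n (mat_mul n A B) mat_id /\ mat_eq n (mat_mul n B A) mat_id.

Definition region : Type := R -> R -> Prop.

Definition open_region (U : region) : Prop :=
  forall r v, U r v -> exists d, 0 < d /\
    forall r' v', Rabs (r' - r) < d -> Rabs (v' - v) < d -> U r' v'.

Definition in_weyl_half_plane (U : region) : Prop := forall r v, U r v -> 0 < r.

Definition cont_on (U : region) (f : R -> R -> R) : Prop :=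
  forall r v, U r v -> forall eps, 0 < eps -> exists d, 0 < d /\
    forall r' v', U r' v' -> Rabs (r' - r) < d -> Rabs (v' - v) < d ->
      Rabs (f r' v' - f r v) < eps.

Definition pd_rho (U : region) (f g : R -> R -> R) : Prop :=
  forall r v, U r v -> derivable_pt_lim (fun x => f x v) r (g r v).
Definition pd_v (U : region) (f g : R -> R -> R) : Prop :=
  forall r v, U r v -> derivable_pt_lim (fun y => f r y) v (g r v).

Fixpoint CkR (k : nat) (U : region) (f : R -> R -> R) : Prop :=
  match k with
  | O => cont_on U f
  | S k' => cont_on U f /\ exists gr gv : R -> R -> R,
             pd_rho U f gr /\ pd_v U f gv /\ CkR k' U gr /\ CkR k' U gv
  end.

Definition CkC (k : nat) (U : region) (f : R -> R -> Cx) : Prop :=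
  CkR k U (fun r v => Cre (f r v)) /\ CkR k U (fun r v => Cim (f r v)).
Definition SmoothC (U : region) (f : R -> R -> Cx) : Prop := forall k, CkC k U f.
Definition pdC_rho (U : region) (f g : R -> R -> Cx) : Prop :=
  pd_rho U (fun r v => Cre (f r v)) (fun r v => Cre (g r v)) /\
  pd_rho U (fun r v => Cim (f r v)) (fun r v => Cim (g r v)).
Definition pdC_v (U : region) (f g : R -> R -> Cx) : Prop :=
  pd_v U (fun r v => Cre (f r v)) (fun r v => Cre (g r v)) /\
  pd_v U (fun r v => Cim (f r v)) (fun r v => Cim (g r v)).

Definition CkM (n k : nat) (U : region) (F : R -> R -> Mat) : Prop :=
  forall i j, (i < n)%nat -> (j < n)%nat -> CkC k U (fun r v => F r v i j).
Definition pdM_rho (n : nat) (U : region) (F G : R -> R -> Mat) : Prop :=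
  forall i j, (i < n)%nat -> (j < n)%nat ->
    pdC_rho U (fun r v => F r v i j) (fun r v => G r v i j).
Definition pdM_v (n : nat) (U : region) (F G : R -> R -> Mat) : Prop :=
  forall i j, (i < n)%nat -> (j < n)%nat ->
    pdC_v U (fun r v => F r v i j) (fun r v => G r v i j).

(* Main.v *)
Require Import Defs.
From Stdlib Require Import Reals Lra Lia.
From Coquelicot Require Coquelicot.
From Stdlib Require Import IndefiniteDescription Classical.
Open Scope R_scope.

Definition C1 : Cx := RtoC 1.

Lemma Cx_ring : ring_theory C0 C1 Cadd Cmul Csub Copp (@eq Cx).
Proof.
  constructor; intros;
  repeat match goal with z : Cx |- _ => destruct z end;
  unfold Csub, C0, C1, RtoC, Cadd, Cmul, Copp; simpl; f_equal; ring.
Qed.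
Add Ring CxRing : Cx_ring.

Lemma Cscal_mul a z : Cscal a z = Cmul (RtoC a) z.
Proof. destruct z; unfold Cscal, Cmul, RtoC; simpl; f_equal; ring. Qed.
Lemma RtoC_mul a b : RtoC (a * b) = Cmul (RtoC a) (RtoC b).
Proof. unfold Cmul, RtoC; simpl; f_equal; ring. Qed.
Lemma RtoC_add a b : RtoC (a + b) = Cadd (RtoC a) (RtoC b).
Proof. unfold Cadd, RtoC; simpl; f_equal; ring. Qed.
Lemma RtoC_opp a : RtoC (- a) = Copp (RtoC a).
Proof. unfold Copp, RtoC; simpl; f_equal; ring. Qed.
Lemma RtoC_0 : RtoC 0 = C0. Proof. reflexivity. Qed.

Lemma Cx_eq (z w : Cx) : fst z = fst w -> snd z = snd w -> z = w.
Proof. destruct z, w; simpl; intros; subst; auto. Qed.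

Lemma Cmul_cancel (z w : Cx) : z <> C0 -> Cmul z w = C0 -> w = C0.
Proof.
  destruct z as [a b], w as [c d]; unfold Cmul, C0; simpl; intros Hz H.
  injection H as H1 H2.
  assert (Hn : a*a + b*b <> 0).
  { intro Hn. apply Hz. assert (a = 0) by nra. assert (b = 0) by nra. subst; auto. }
  assert (c * (a*a+b*b) = 0).
  { replace (c * (a*a+b*b)) with (a*(a*c-b*d) + b*(a*d+b*c)) by ring. rewrite H1, H2; ring. }
  assert (d * (a*a+b*b) = 0).
  { replace (d * (a*a+b*b)) with (a*(a*d+b*c) - b*(a*c-b*d)) by ring. rewrite H1, H2; ring. }
  apply Rmult_integral in H. apply Rmult_integral in H0.
  destruct H, H0; try contradiction; subst; auto.
Qed.

Lemma Csum_ext m f g : (forall k, (k < m)%nat -> f k = g k) -> Csum m f = Csum m g.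
Proof.
  induction m; simpl; intros H; auto.
  rewrite IHm by (intros; apply H; lia). rewrite H by lia. auto.
Qed.
Lemma Csum_add m f g : Csum m (fun k => Cadd (f k) (g k)) = Cadd (Csum m f) (Csum m g).
Proof. induction m; simpl. apply Cx_eq; simpl; ring. rewrite IHm; ring. Qed.
Lemma Csum_mul_l m c f : Csum m (fun k => Cmul c (f k)) = Cmul c (Csum m f).
Proof. induction m; simpl. apply Cx_eq; simpl; ring. rewrite IHm; ring. Qed.
Lemma Csum_opp m f : Csum m (fun k => Copp (f k)) = Copp (Csum m f).
Proof. induction m; simpl. apply Cx_eq; simpl; ring. rewrite IHm; ring. Qed.
Lemma Csum_swap m p (F : nat -> nat -> Cx) :
  Csum m (fun k => Csum p (fun l => F k l)) = Csum p (fun l => Csum m (fun k => F k l)).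
Proof.
  induction m; simpl.
  - induction p; simpl; auto. rewrite <- IHp. apply Cx_eq; simpl; ring.
  - rewrite IHm. rewrite <- Csum_add. auto.
Qed.
Lemma Csum_zero m f : (forall k, (k < m)%nat -> f k = C0) -> Csum m f = C0.
Proof.
  induction m; simpl; intros H; auto.
  rewrite IHm by (intros; apply H; lia). rewrite H by lia. apply Cx_eq; simpl; ring.
Qed.
Lemma Csum_delta m f j : (j < m)%nat ->
  Csum m (fun k => Cmul (f k) (if Nat.eqb k j then RtoC 1 else C0)) = f j.
Proof.
  induction m; intros Hj; simpl. lia.
  destruct (Nat.eq_dec j m).
  - subst. rewrite Nat.eqb_refl. rewrite Csum_zero.
    apply Cx_eq; simpl; ring.
    intros k Hk. destruct (Nat.eqb_spec k m). lia. apply Cx_eq; simpl; ring.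
  - rewrite IHm by lia. destruct (Nat.eqb_spec m j). lia. apply Cx_eq; simpl; ring.
Qed.
Lemma Csum_delta_l m f i : (i < m)%nat ->
  Csum m (fun k => Cmul (if Nat.eqb i k then RtoC 1 else C0) (f k)) = f i.
Proof.
  intros. rewrite <- (Csum_delta m f i H). apply Csum_ext. intros k _.
  destruct (Nat.eqb_spec i k), (Nat.eqb_spec k i); try lia; ring.
Qed.

Lemma Csum_mul_r m c f : Csum m (fun k => Cmul (f k) c) = Cmul (Csum m f) c.
Proof. induction m; simpl. apply Cx_eq; simpl; ring. rewrite IHm; ring. Qed.

Section MatLemmas.
Variable n : nat.
Lemma mm_assoc A B C i j :
  mat_mul n (mat_mul n A B) C i j = mat_mul n A (mat_mul n B C) i j.
Proof.
  unfold mat_mul.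
  transitivity (Csum n (fun k => Csum n (fun l => Cmul (A i l) (Cmul (B l k) (C k j))))).
  - apply Csum_ext; intros k _. rewrite <- Csum_mul_r. apply Csum_ext; intros; ring.
  - rewrite Csum_swap. apply Csum_ext; intros l _. rewrite <- Csum_mul_l. auto.
Qed.
Lemma mm_add_r A B C i j :
  mat_mul n A (mat_add B C) i j = Cadd (mat_mul n A B i j) (mat_mul n A C i j).
Proof. unfold mat_mul, mat_add. rewrite <- Csum_add. apply Csum_ext; intros; ring. Qed.
Lemma mm_add_l A B C i j :
  mat_mul n (mat_add A B) C i j = Cadd (mat_mul n A C i j) (mat_mul n B C i j).
Proof. unfold mat_mul, mat_add. rewrite <- Csum_add. apply Csum_ext; intros; ring. Qed.
Lemma mm_sub_r A B C i j :
  mat_mul n A (mat_sub B C) i j = Csub (mat_mul n A B i j) (mat_mul n A C i j).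
Proof. unfold mat_mul, mat_sub, Csub. rewrite <- Csum_opp, <- Csum_add. apply Csum_ext; intros; ring. Qed.
Lemma mm_sub_l A B C i j :
  mat_mul n (mat_sub A B) C i j = Csub (mat_mul n A C i j) (mat_mul n B C i j).
Proof. unfold mat_mul, mat_sub, Csub. rewrite <- Csum_opp, <- Csum_add. apply Csum_ext; intros; ring. Qed.
Lemma mm_cscale_r A c B i j :
  mat_mul n A (mat_cscale c B) i j = Cmul c (mat_mul n A B i j).
Proof. unfold mat_mul, mat_cscale. rewrite <- Csum_mul_l. apply Csum_ext; intros; ring. Qed.
Lemma mm_cscale_l A c B i j :
  mat_mul n (mat_cscale c A) B i j = Cmul c (mat_mul n A B i j).
Proof. unfold mat_mul, mat_cscale. rewrite <- Csum_mul_l. apply Csum_ext; intros; ring. Qed.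
Lemma mm_rscale_r A c B i j :
  mat_mul n A (mat_rscale c B) i j = Cmul (RtoC c) (mat_mul n A B i j).
Proof. unfold mat_mul, mat_rscale. rewrite <- Csum_mul_l. apply Csum_ext; intros; rewrite Cscal_mul; ring. Qed.
Lemma mm_rscale_l A c B i j :
  mat_mul n (mat_rscale c A) B i j = Cmul (RtoC c) (mat_mul n A B i j).
Proof. unfold mat_mul, mat_rscale. rewrite <- Csum_mul_l. apply Csum_ext; intros; rewrite Cscal_mul; ring. Qed.
Lemma mm_id_r A i j : (j < n)%nat -> mat_mul n A mat_id i j = A i j.
Proof. intros. unfold mat_mul, mat_id. apply Csum_delta; auto. Qed.
Lemma mm_id_l A i j : (i < n)%nat -> mat_mul n mat_id A i j = A i j.
Proof. intros. unfold mat_mul, mat_id. apply (Csum_delta_l n (fun k => A k j) i); auto. Qed.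
Lemma mm_congr_l A A' B i j : mat_eq n A A' -> (i < n)%nat ->
  mat_mul n A B i j = mat_mul n A' B i j.
Proof. intros H Hi. unfold mat_mul. apply Csum_ext; intros k Hk. rewrite H; auto. Qed.
Lemma mm_congr_r A B B' i j : mat_eq n B B' -> (j < n)%nat ->
  mat_mul n A B i j = mat_mul n A B' i j.
Proof. intros H Hj. unfold mat_mul. apply Csum_ext; intros k Hk. rewrite H; auto. Qed.
Lemma mm_cancel_r A X Xi : mat_inverse n X Xi ->
  (forall i j, (i < n)%nat -> (j < n)%nat -> mat_mul n A X i j = C0) ->
  forall i j, (i < n)%nat -> (j < n)%nat -> A i j = C0.
Proof.
  intros [H1 H2] H i j Hi Hj.
  rewrite <- (mm_id_r A i j Hj).
  rewrite (mm_congr_r A _ _ i j (fun a b ha hb => eq_sym (H1 a b ha hb)) Hj).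
  rewrite <- mm_assoc. unfold mat_mul at 1. apply Csum_zero. intros k Hk.
  rewrite H by auto. apply Cx_eq; simpl; ring.
Qed.
Lemma mm_cancel_l A X Xi : mat_inverse n X Xi ->
  (forall i j, (i < n)%nat -> (j < n)%nat -> mat_mul n X A i j = C0) ->
  forall i j, (i < n)%nat -> (j < n)%nat -> A i j = C0.
Proof.
  intros [H1 H2] H i j Hi Hj.
  rewrite <- (mm_id_l A i j Hi).
  rewrite (mm_congr_l _ _ A i j (fun a b ha hb => eq_sym (H2 a b ha hb)) Hi).
  rewrite mm_assoc. unfold mat_mul at 1. apply Csum_zero. intros k Hk.
  rewrite H by auto. apply Cx_eq; simpl; ring.
Qed.
End MatLemmas.
Lemma dext f g x l : (forall t, f t = g t) -> derivable_pt_lim f x l -> derivable_pt_lim g x l.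
Proof.
  intros E H eps Heps. destruct (H eps Heps) as [d Hd]. exists d. intros h Hh1 Hh2.
  rewrite <- !E. auto.
Qed.
Lemma dext_loc f g x l d : 0 < d -> (forall t, Rabs (t - x) < d -> f t = g t) ->
  derivable_pt_lim g x l -> derivable_pt_lim f x l.
Proof.
  intros Hd E H eps Heps. destruct (H eps Heps) as [d' Hd'].
  assert (Hm : 0 < Rmin d d') by (apply Rmin_pos; [lra| apply cond_pos]).
  exists (mkposreal _ Hm). intros h Hh1 Hh2. simpl in Hh2.
  rewrite (E x) by (unfold Rminus; rewrite Rplus_opp_r, Rabs_R0; lra).
  rewrite (E (x + h)).
  apply Hd'; auto. apply Rlt_le_trans with (1 := Hh2); apply Rmin_r.
  replace (x + h - x) with h by ring. apply Rlt_le_trans with (1 := Hh2); apply Rmin_l.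
Qed.
Lemma dval f x l l' : derivable_pt_lim f x l -> l = l' -> derivable_pt_lim f x l'.
Proof. intros H ->; auto. Qed.
Lemma dplus f g x a b : derivable_pt_lim f x a -> derivable_pt_lim g x b ->
  derivable_pt_lim (fun t => f t + g t) x (a + b).
Proof. intros. apply (derivable_pt_lim_plus f g); auto. Qed.
Lemma dminus f g x a b : derivable_pt_lim f x a -> derivable_pt_lim g x b ->
  derivable_pt_lim (fun t => f t - g t) x (a - b).
Proof. intros. apply (derivable_pt_lim_minus f g); auto. Qed.
Lemma dopp f x a : derivable_pt_lim f x a -> derivable_pt_lim (fun t => - f t) x (- a).
Proof. intros. apply (derivable_pt_lim_opp f); auto. Qed.
Lemma dmult f g x a b : derivable_pt_lim f x a -> derivable_pt_lim g x b ->
  derivable_pt_lim (fun t => f t * g t) x (a * g x + f x * b).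
Proof. intros. apply (derivable_pt_lim_mult f g); auto. Qed.
Lemma dconst c x : derivable_pt_lim (fun _ => c) x 0.
Proof. apply derivable_pt_lim_const. Qed.
Lemma did x : derivable_pt_lim (fun t => t) x 1.
Proof. apply derivable_pt_lim_id. Qed.

Definition cd (g : R -> Cx) (x : R) (c : Cx) : Prop :=
  derivable_pt_lim (fun t => fst (g t)) x (fst c) /\
  derivable_pt_lim (fun t => snd (g t)) x (snd c).

Lemma cd_add f g x a b : cd f x a -> cd g x b -> cd (fun t => Cadd (f t) (g t)) x (Cadd a b).
Proof. intros [H1 H2] [H3 H4]; split; simpl; apply dplus; auto. Qed.
Lemma cd_opp f x a : cd f x a -> cd (fun t => Copp (f t)) x (Copp a).
Proof. intros [H1 H2]; split; simpl; apply dopp; auto. Qed.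
Lemma cd_sub f g x a b : cd f x a -> cd g x b -> cd (fun t => Csub (f t) (g t)) x (Csub a b).
Proof. intros. unfold Csub. apply cd_add; auto. apply cd_opp; auto. Qed.
Lemma cd_mul f g x a b : cd f x a -> cd g x b ->
  cd (fun t => Cmul (f t) (g t)) x (Cadd (Cmul a (g x)) (Cmul (f x) b)).
Proof.
  intros [H1 H2] [H3 H4]; split; simpl.
  - eapply dval. apply dminus; apply dmult; eauto. cbv beta; ring.
  - eapply dval. apply dplus; apply dmult; eauto. cbv beta; ring.
Qed.
Lemma cd_const c x : cd (fun _ => c) x C0.
Proof. split; simpl; apply dconst. Qed.
Lemma cd_real h x l : derivable_pt_lim h x l -> cd (fun t => RtoC (h t)) x (RtoC l).
Proof. intros H; split; simpl; auto. apply dconst. Qed.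
Lemma cd_ext f g x a : (forall t, f t = g t) -> cd f x a -> cd g x a.
Proof. intros E [H1 H2]; split; eapply dext; eauto; intros; simpl; rewrite E; auto. Qed.
Lemma cd_ext_loc f g x a d : 0 < d -> (forall t, Rabs (t - x) < d -> f t = g t) ->
  cd g x a -> cd f x a.
Proof. intros Hd E [H1 H2]; split; eapply dext_loc; eauto; intros; simpl; rewrite E; auto. Qed.
Lemma cd_unique f x a b : cd f x a -> cd f x b -> a = b.
Proof.
  intros [H1 H2] [H3 H4]. apply Cx_eq; eapply uniqueness_limite; eauto.
Qed.
Lemma cd_val f x a b : cd f x a -> a = b -> cd f x b.
Proof. intros H ->; auto. Qed.
Lemma cd_Csum m (F : R -> nat -> Cx) DF x :
  (forall k, (k < m)%nat -> cd (fun t => F t k) x (DF k)) ->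
  cd (fun t => Csum m (F t)) x (Csum m DF).
Proof.
  induction m; intros H; simpl.
  - apply cd_const.
  - apply cd_add. apply IHm; intros; apply H; lia. apply H; lia.
Qed.

Definition md (n : nat) (G : R -> Mat) (x : R) (D : Mat) : Prop :=
  forall i j, (i < n)%nat -> (j < n)%nat -> cd (fun t => G t i j) x (D i j).

Section MD.
Variable n : nat.
Lemma md_mul A B x DA DB : md n A x DA -> md n B x DB ->
  md n (fun t => mat_mul n (A t) (B t)) x
     (mat_add (mat_mul n DA (B x)) (mat_mul n (A x) DB)).
Proof.
  intros HA HB i j Hi Hj. unfold mat_mul, mat_add. rewrite <- Csum_add.
  apply cd_Csum. intros k Hk. apply cd_mul; auto.
Qed.
Lemma md_add A B x DA DB : md n A x DA -> md n B x DB ->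
  md n (fun t => mat_add (A t) (B t)) x (mat_add DA DB).
Proof. intros HA HB i j Hi Hj. apply cd_add; auto. Qed.
Lemma md_sub A B x DA DB : md n A x DA -> md n B x DB ->
  md n (fun t => mat_sub (A t) (B t)) x (mat_sub DA DB).
Proof. intros HA HB i j Hi Hj. apply cd_sub; auto. Qed.
Lemma md_cscale f B x a DB : cd f x a -> md n B x DB ->
  md n (fun t => mat_cscale (f t) (B t)) x
     (mat_add (mat_cscale a (B x)) (mat_cscale (f x) DB)).
Proof. intros Hf HB i j Hi Hj. apply cd_mul; auto. Qed.
Lemma md_rscale h B x a DB : derivable_pt_lim h x a -> md n B x DB ->
  md n (fun t => mat_rscale (h t) (B t)) x
     (mat_add (mat_rscale a (B x)) (mat_rscale (h x) DB)).
Proof.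
  intros Hf HB i j Hi Hj. unfold mat_rscale, mat_add.
  apply (cd_ext (fun t => Cmul (RtoC (h t)) (B t i j))). intros; rewrite Cscal_mul; reflexivity.
  eapply cd_val. apply cd_mul. apply cd_real; eauto. apply HB; auto.
  rewrite !Cscal_mul; auto.
Qed.
Lemma md_const C x : md n (fun _ => C) x mat_zero.
Proof. intros i j _ _. apply cd_const. Qed.
Lemma md_ext_loc F G x D d : 0 < d ->
  (forall t, Rabs (t - x) < d -> mat_eq n (F t) (G t)) -> md n G x D -> md n F x D.
Proof. intros Hd E H i j Hi Hj. eapply cd_ext_loc; eauto. intros; apply E; auto. Qed.
Lemma md_unique F x D1 D2 : md n F x D1 -> md n F x D2 -> mat_eq n D1 D2.
Proof. intros H1 H2 i j Hi Hj. eapply cd_unique; eauto. Qed.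
Lemma md_val F x D1 D2 : md n F x D1 -> mat_eq n D1 D2 -> md n F x D2.
Proof. intros H E i j Hi Hj. rewrite <- E by auto. auto. Qed.
End MD.
Lemma Derive_loc f g x l d : 0 < d -> (forall t, Rabs (t - x) < d -> f t = g t) ->
  derivable_pt_lim g x l -> Derive.Derive f x = l.
Proof.
  intros Hd E H. apply Derive.is_derive_unique. apply Derive.is_derive_Reals.
  eapply dext_loc; eauto.
Qed.
Lemma exd_of f x l : derivable_pt_lim f x l -> @Derive.ex_derive Hierarchy.R_AbsRing Hierarchy.R_NormedModule f x.
Proof. intros H. exists l. apply Derive.is_derive_Reals; auto. Qed.

Lemma abs_tri3 a b c d : Rabs (a - b) < d -> Rabs (b - c) < d -> Rabs (a - c) < 2 * d.
Proof.
  intros H1 H2. replace (a - c) with ((a - b) + (b - c)) by ring.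
  eapply Rle_lt_trans. apply Rabs_triang. lra.
Qed.

Lemma schwarz_R U f gr gv grv gvr r v : open_region U ->
  pd_rho U f gr -> pd_v U f gv -> pd_v U gr grv -> pd_rho U gv gvr ->
  cont_on U grv -> cont_on U gvr -> U r v -> grv r v = gvr r v.
Proof.
  intros HU Hr Hv Hrv Hvr Crv Cvr Hin.
  destruct (HU r v Hin) as [d [Hd Hball]].
  set (d2 := d / 2).
  assert (Hd2 : 0 < d2) by (unfold d2; lra).
  assert (Hdd : d = 2 * d2) by (unfold d2; lra).
  clearbody d2.
  assert (F1 : forall u w z, Rabs (u - r) < d2 -> Rabs (w - v) < d2 -> Rabs (z - u) < d2 -> U z w).
  { intros u w z Hu Hw Hz. apply Hball.
    rewrite Hdd. eapply abs_tri3; eauto. lra. }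
  assert (F2 : forall u w z, Rabs (u - r) < d2 -> Rabs (w - v) < d2 -> Rabs (z - w) < d2 -> U u z).
  { intros u w z Hu Hw Hz. apply Hball. lra.
    rewrite Hdd. eapply abs_tri3; eauto. }
  assert (F0 : forall u w, Rabs (u - r) < d2 -> Rabs (w - v) < d2 -> U u w).
  { intros. apply Hball; lra. }
  assert (DDV : forall u w, Rabs (u - r) < d2 -> Rabs (w - v) < d2 ->
     derivable_pt_lim (fun z => Derive.Derive (fun t => f z t) w) u (gvr u w)).
  { intros u w Hu Hw. apply (dext_loc _ (fun z => gv z w) _ _ d2 Hd2).
    - intros z Hz. apply Derive.is_derive_unique. apply Derive.is_derive_Reals.
      apply Hv. eapply F1; eauto.
    - apply Hvr. auto. }
  assert (DDR : forall u w, Rabs (u - r) < d2 -> Rabs (w - v) < d2 ->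
     derivable_pt_lim (fun z => Derive.Derive (fun t => f t z) u) w (grv u w)).
  { intros u w Hu Hw. apply (dext_loc _ (fun z => gr u z) _ _ d2 Hd2).
    - intros z Hz. apply Derive.is_derive_unique. apply Derive.is_derive_Reals.
      apply Hr. eapply F2; eauto.
    - apply Hrv. auto. }
  assert (EV : forall u w, Rabs (u - r) < d2 -> Rabs (w - v) < d2 ->
     Derive.Derive (fun z => Derive.Derive (fun t => f z t) w) u = gvr u w).
  { intros. apply Derive.is_derive_unique. apply Derive.is_derive_Reals. auto. }
  assert (ER : forall u w, Rabs (u - r) < d2 -> Rabs (w - v) < d2 ->
     Derive.Derive (fun z => Derive.Derive (fun t => f t z) u) w = grv u w).
  { intros. apply Derive.is_derive_unique. apply Derive.is_derive_Reals. auto. }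
  assert (Hrv0 : Rabs (r - r) < d2) by (unfold Rminus; rewrite Rplus_opp_r, Rabs_R0; lra).
  assert (Hvv0 : Rabs (v - v) < d2) by (unfold Rminus; rewrite Rplus_opp_r, Rabs_R0; lra).
  pose proof (Derive_2d.Schwarz f r v) as S.
  rewrite EV, ER in S by auto. symmetry. apply S.
  - exists (mkposreal d2 Hd2). simpl. intros u w Hu Hw.
    split; [|split; [|split]].
    + eapply exd_of. apply Hr. auto.
    + eapply exd_of. apply Hv. auto.
    + eapply exd_of. apply DDV; auto.
    + eapply exd_of. apply DDR; auto.
  - intros eps. destruct (Cvr r v Hin eps (cond_pos eps)) as [d' [Hd' Hc]].
    assert (Hm : 0 < Rmin d' d2) by (apply Rmin_pos; lra).
    exists (mkposreal _ Hm). simpl. intros u w Hu Hw.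
    pose proof (Rmin_l d' d2). pose proof (Rmin_r d' d2).
    rewrite EV, EV by (auto; lra). apply Hc; try lra. apply F0; lra.
  - intros eps. destruct (Crv r v Hin eps (cond_pos eps)) as [d' [Hd' Hc]].
    assert (Hm : 0 < Rmin d' d2) by (apply Rmin_pos; lra).
    exists (mkposreal _ Hm). simpl. intros u w Hu Hw.
    pose proof (Rmin_l d' d2). pose proof (Rmin_r d' d2).
    rewrite ER, ER by (auto; lra). apply Hc; try lra. apply F0; lra.
Qed.
Lemma C2_info_R U f fr fv : open_region U -> CkR 2 U f -> pd_rho U f fr -> pd_v U f fv ->
  forall r v, U r v -> exists a b d,
    derivable_pt_lim (fun t => fr t v) r a /\ derivable_pt_lim (fun t => fr r t) v b /\
    derivable_pt_lim (fun t => fv t v) r b /\ derivable_pt_lim (fun t => fv r t) v d.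
Proof.
  intros HU Hf Hfr Hfv r v Hin.
  destruct Hf as [_ [gr [gv [Pr [Pv [C1r C1v]]]]]].
  destruct C1r as [_ [grr [grv [Prr [Prv [C0rr C0rv]]]]]].
  destruct C1v as [_ [gvr [gvv [Pvr [Pvv [C0vr C0vv]]]]]].
  simpl in *.
  assert (Er : forall a b, U a b -> fr a b = gr a b).
  { intros a b Hab. eapply uniqueness_limite; [apply Hfr|apply Pr]; auto. }
  assert (Ev : forall a b, U a b -> fv a b = gv a b).
  { intros a b Hab. eapply uniqueness_limite; [apply Hfv|apply Pv]; auto. }
  destruct (HU r v Hin) as [d [Hd Hball]].
  assert (Z : forall x, Rabs (x - x) < d) by (intros; unfold Rminus; rewrite Rplus_opp_r, Rabs_R0; lra).
  exists (grr r v), (grv r v), (gvv r v).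
  split; [|split; [|split]].
  - apply (dext_loc _ (fun t => gr t v) _ _ d Hd). intros t Ht. apply Er, Hball; auto. apply Prr; auto.
  - apply (dext_loc _ (fun t => gr r t) _ _ d Hd). intros t Ht. apply Er, Hball; auto. apply Prv; auto.
  - rewrite (schwarz_R U f gr gv grv gvr r v HU Pr Pv Prv Pvr C0rv C0vr Hin).
    apply (dext_loc _ (fun t => gv t v) _ _ d Hd). intros t Ht. apply Ev, Hball; auto. apply Pvr; auto.
  - apply (dext_loc _ (fun t => gv r t) _ _ d Hd). intros t Ht. apply Ev, Hball; auto. apply Pvv; auto.
Qed.

Lemma C1_info_R U f : CkR 1 U f -> forall r v, U r v -> exists a b,
    derivable_pt_lim (fun t => f t v) r a /\ derivable_pt_lim (fun t => f r t) v b.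
Proof.
  intros [_ [gr [gv [Pr [Pv _]]]]] r v Hin. exists (gr r v), (gv r v). split; auto.
Qed.

Lemma ex_mat {T : Type} (inh : T) n (P : nat -> nat -> T -> Prop) :
  (forall i j, (i < n)%nat -> (j < n)%nat -> exists c, P i j c) ->
  exists D : nat -> nat -> T, forall i j, (i < n)%nat -> (j < n)%nat -> P i j (D i j).
Proof.
  intros H.
  assert (H' : forall i j, exists c, (i < n)%nat -> (j < n)%nat -> P i j c).
  { intros i j. destruct (Compare_dec.lt_dec i n), (Compare_dec.lt_dec j n).
    - destruct (H i j) as [c Hc]; auto. exists c; auto.
    - exists inh; intros; contradiction.
    - exists inh; intros; contradiction.
    - exists inh; intros; contradiction. }
  exists (fun i j => proj1_sig (constructive_indefinite_description _ (H' i j))).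
  intros i j Hi Hj. destruct (constructive_indefinite_description _ (H' i j)); simpl; auto.
Qed.

Lemma C2_info_M n U X Xr Xv : open_region U -> CkM n 2 U X -> pdM_rho n U X Xr -> pdM_v n U X Xv ->
  forall r v, U r v -> exists Xrr W Xvv : Mat,
    md n (fun t => Xr t v) r Xrr /\ md n (fun t => Xr r t) v W /\
    md n (fun t => Xv t v) r W /\ md n (fun t => Xv r t) v Xvv.
Proof.
  intros HU HX HXr HXv r v Hin.
  destruct (ex_mat (C0, C0, C0) n (fun i j (c : Cx * Cx * Cx) =>
     let '(a, b, d) := c in
     cd (fun t => Xr t v i j) r a /\ cd (fun t => Xr r t i j) v b /\
     cd (fun t => Xv t v i j) r b /\ cd (fun t => Xv r t i j) v d)) as [D HD].
  { intros i j Hi Hj.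
    destruct (HX i j Hi Hj) as [Hre Him]. destruct (HXr i j Hi Hj) as [Rre Rim].
    destruct (HXv i j Hi Hj) as [Vre Vim].
    destruct (C2_info_R _ _ _ _ HU Hre Rre Vre r v Hin) as [a1 [b1 [d1 [A1 [B1 [C1' D1]]]]]].
    destruct (C2_info_R _ _ _ _ HU Him Rim Vim r v Hin) as [a2 [b2 [d2 [A2 [B2 [C2' D2]]]]]].
    exists ((a1, a2), (b1, b2), (d1, d2)). unfold cd, Cre, Cim in *; simpl in *.
    repeat split; auto. }
  exists (fun i j => fst (fst (D i j))), (fun i j => snd (fst (D i j))), (fun i j => snd (D i j)).
  split; [|split; [|split]]; intros i' j' Hi Hj; specialize (HD i' j' Hi Hj);
    destruct (D i' j') as [[a b] d]; simpl; tauto.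
Qed.

Lemma C1_info_M n U X : CkM n 1 U X -> forall r v, U r v -> exists D1 D2 : Mat,
    md n (fun t => X t v) r D1 /\ md n (fun t => X r t) v D2.
Proof.
  intros HX r v Hin.
  destruct (ex_mat (C0, C0) n (fun i j (c : Cx * Cx) =>
     cd (fun t => X t v i j) r (fst c) /\ cd (fun t => X r t i j) v (snd c))) as [D HD].
  { intros i j Hi Hj. destruct (HX i j Hi Hj) as [Hre Him].
    destruct (C1_info_R _ _ Hre r v Hin) as [a1 [b1 [A1 B1]]].
    destruct (C1_info_R _ _ Him r v Hin) as [a2 [b2 [A2 B2]]].
    exists ((a1, a2), (b1, b2)). unfold cd, Cre, Cim in *; simpl in *. repeat split; auto. }
  exists (fun i j => fst (D i j)), (fun i j => snd (D i j)).
  split; intros i j Hi Hj; apply (HD i j Hi Hj).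
Qed.

Lemma C1_info_C U f : CkC 1 U f -> forall r v, U r v -> exists a b : Cx,
    cd (fun t => f t v) r a /\ cd (fun t => f r t) v b.
Proof.
  intros [Hre Him] r v Hin.
  destruct (C1_info_R _ _ Hre r v Hin) as [a1 [b1 [A1 B1]]].
  destruct (C1_info_R _ _ Him r v Hin) as [a2 [b2 [A2 B2]]].
  exists (a1, a2), (b1, b2). unfold cd, Cre, Cim in *; simpl in *. repeat split; auto.
Qed.

Lemma pdM_rho_md n U F G : pdM_rho n U F G -> forall r v, U r v -> md n (fun t => F t v) r (G r v).
Proof. intros H r v Hin i j Hi Hj. destruct (H i j Hi Hj) as [H1 H2]. split; [apply H1|apply H2]; auto. Qed.
Lemma pdM_v_md n U F G : pdM_v n U F G -> forall r v, U r v -> md n (fun t => F r t) v (G r v).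
Proof. intros H r v Hin i j Hi Hj. destruct (H i j Hi Hj) as [H1 H2]. split; [apply H1|apply H2]; auto. Qed.
Lemma md_pdM_rho n U F G : (forall r v, U r v -> md n (fun t => F t v) r (G r v)) -> pdM_rho n U F G.
Proof. intros H i j Hi Hj. split; intros r v Hin; apply (H r v Hin i j Hi Hj). Qed.
Lemma md_pdM_v n U F G : (forall r v, U r v -> md n (fun t => F r t) v (G r v)) -> pdM_v n U F G.
Proof. intros H i j Hi Hj. split; intros r v Hin; apply (H r v Hin i j Hi Hj). Qed.
Definition KK (f s rho c : Cx) := Cadd (Cmul (Cadd rho rho) f) (Cmul (Cadd s s) c).
Definition ex1 f fv p a W ArvX Arq Xvv :=
  Csub (Cadd (Cmul fv (Cadd p a)) (Cmul f (Cadd W (Cadd ArvX Arq)))) Xvv.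
Definition ex2 f fr s q b W AvrX Avp Xrr :=
  Csub (Cadd (Cmul fr (Cadd q b)) (Cmul f (Cadd W (Cadd AvrX Avp)))) (Cmul (Copp s) Xrr).
Definition ex3 f fr p a W ArrX Arp Xrr :=
  Csub (Cadd (Cmul fr (Cadd p a)) (Cmul f (Cadd Xrr (Cadd ArrX Arp)))) W.
Definition ex4 f fv s q b W AvvX Avq Xvv :=
  Csub (Cadd (Cmul fv (Cadd q b)) (Cmul f (Cadd Xvv (Cadd AvvX Avq)))) (Cmul (Copp s) W).
Definition ee1 f p a q := Csub (Cmul f (Cadd p a)) q.
Definition ee2 f s p q b := Csub (Cmul f (Cadd q b)) (Cmul (Copp s) p).
Definition ee4 f s Arp Arq Arb := Csub (Cmul f (Cadd Arq Arb)) (Cmul (Copp s) Arp).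
Definition ee5 f Avp Ava Avq := Csub (Cmul f (Cadd Avp Ava)) Avq.
Definition eef AvrX ArvX Ava Arb := Csub (Csub AvrX ArvX) (Csub Ava Arb).
Definition rr0 f s rho c := Csub (Cadd (Cmul rho (Cmul f f)) (Cmul (Cadd s s) (Cmul c f))) (Cmul s rho).
Definition rr1 f fr s rho c := Csub (Cadd (Cmul fr (KK f s rho c)) (Cmul f f)) s.
Definition rr2 f fv s rho c := Csub (Cmul fv (KK f s rho c)) (Cmul (Cadd s s) f).

Lemma key_alg f fr fv s rho c p q a b W Xrr Xvv ArrX ArvX AvrX AvvX Arp Arq Arb Avp Avq Ava :
  ex1 f fv p a W ArvX Arq Xvv = C0 ->
  ex2 f fr s q b W AvrX Avp Xrr = C0 ->
  ex3 f fr p a W ArrX Arp Xrr = C0 ->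
  ex4 f fv s q b W AvvX Avq Xvv = C0 ->
  ee1 f p a q = C0 -> ee2 f s p q b = C0 -> ee4 f s Arp Arq Arb = C0 ->
  ee5 f Avp Ava Avq = C0 -> eef AvrX ArvX Ava Arb = C0 ->
  rr0 f s rho c = C0 -> rr1 f fr s rho c = C0 -> rr2 f fv s rho c = C0 ->
  Cmul (Cmul (Cmul f f) (KK f s rho c))
       (Cadd (Cmul s a) (Cadd (Cmul s (Cmul rho ArrX)) (Cmul rho AvvX))) = C0.
Proof.
  intros H1 H2 H3 H4 G1 G2 G4 G5 GF R0 R1 R2.
  set (K := KK f s rho c).
  set (T := Cadd (Csub (Cadd (Cmul f (ex1 f fv p a W ArvX Arq Xvv)) (ex4 f fv s q b W AvvX Avq Xvv))
                       (Cmul f (ex2 f fr s q b W AvrX Avp Xrr))) (Cmul s (ex3 f fr p a W ArrX Arp Xrr))).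
  set (t1 := Cmul (Cmul rho K) (Cmul f T)).
  set (t2 := Cmul (Cmul s (Cmul f K)) (ee1 f p a q)).
  set (t3 := Cmul q (Csub (Cmul rho (Cadd (Cmul f (rr2 f fv s rho c)) (Cmul s (rr1 f fr s rho c)))) (Cmul s (rr0 f s rho c)))).
  set (t4 := Cmul p (Cadd (Cmul rho (Cmul s (Csub (Cmul f (rr1 f fr s rho c)) (rr2 f fv s rho c)))) (Cmul s (Cmul f (rr0 f s rho c))))).
  set (t5 := Cmul (Cmul rho K) (Cadd (Cmul (ee1 f p a q) (Cadd (Cmul f fv) (Cmul s fr))) (Cmul (ee2 f s p q b) (Csub fv (Cmul f fr))))).
  set (t6 := Cmul (Cmul rho K) (Cmul f (Csub (Csub (Cmul f (ee4 f s Arp Arq Arb)) (Cmul (Cmul f f) (eef AvrX ArvX Ava Arb))) (Cmul f (ee5 f Avp Ava Avq))))).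
  transitivity (Csub (Csub (Csub (Csub (Cadd t1 t2) t3) t4) t5) t6).
  - unfold t1, t2, t3, t4, t5, t6, T, K, ex1, ex2, ex3, ex4, ee1, ee2, ee4, ee5, eef, rr0, rr1, rr2, KK. ring.
  - unfold t1, t2, t3, t4, t5, t6, T. rewrite H1, H2, H3, H4, G1, G2, G4, G5, GF, R0, R1, R2. ring.
Qed.
Lemma lin1 (psi f p a q : Cx) : Cmul psi f = C1 -> Cmul f (Cadd p a) = q -> a = Csub (Cmul psi q) p.
Proof.
  intros H1 H2. rewrite <- H2.
  transitivity (Cadd (Cmul (Csub C1 (Cmul psi f)) (Cadd p a)) (Csub (Cmul psi (Cmul f (Cadd p a))) p)).
  - ring.
  - rewrite H1. ring.
Qed.
Lemma Cmul_nz z w : z <> C0 -> w <> C0 -> Cmul z w <> C0.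
Proof. intros Hz Hw E. apply Hw. exact (Cmul_cancel z w Hz E). Qed.
Lemma RtoC_nz r : r <> 0 -> RtoC r <> C0.
Proof. intros H E. injection E as E. auto. Qed.

Lemma solve_A n A X Xi B : mat_inverse n X Xi -> mat_eq n (mat_mul n A X) B ->
  mat_eq n A (mat_mul n B Xi).
Proof.
  intros [H1 H2] E i j Hi Hj.
  rewrite <- (mm_id_r n A i j Hj).
  rewrite (mm_congr_r n A _ _ i j (fun a b ha hb => eq_sym (H1 a b ha hb)) Hj).
  rewrite <- mm_assoc. apply mm_congr_l; auto.
Qed.
Lemma inv_mul_cancel n M Mi B : mat_inverse n M Mi -> mat_eq n (mat_mul n M (mat_mul n Mi B)) B.
Proof.
  intros [H1 H2] i j Hi Hj. rewrite <- mm_assoc.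
  rewrite (mm_congr_l n _ mat_id B i j H1 Hi). apply mm_id_l; auto.
Qed.

Lemma dinv r : r <> 0 -> exists l, derivable_pt_lim (fun t => 1 / t) r l.
Proof.
  intros Hr. eexists. eapply dext; [|apply (derivable_pt_lim_div (fun _ => 1) (fun t => t)); [apply dconst|apply did|exact Hr]].
  intros t. reflexivity.
Qed.
Theorem mainTheorem7
  (sigma : R) (Hsigma : sigma = 1 \/ sigma = -1)
  (U : region) (HUopen : open_region U) (HUhalf : in_weyl_half_plane U)
  (phi : R -> R -> Cx) (Hphi_smooth : SmoothC U phi)
  (omega : Cx) (sq : R -> R -> Cx) (pm : R) (Hpm : pm = 1 \/ pm = -1)
  (Hsq_cont : CkC 0 U sq)
  (Hsq : forall r v, U r v ->
     Csq (sq r v) = Cadd (Csq (Csub omega (RtoC v))) (RtoC (sigma * r ^ 2)))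
  (Hphi_form : forall r v, U r v ->
     phi r v = Cscal (/ r) (Cadd (Cscal (- sigma) (Csub omega (RtoC v)))
                                 (Cscal pm (sq r v))))
  (Hphi_nz : forall r v, U r v -> phi r v <> C0)
  (Hphi_nz2 : forall r v, U r v -> Cadd (Csq (phi r v)) (RtoC sigma) <> C0)
  (n : nat)
  (M Minv Mr Mv : R -> R -> Mat)
  (HM : CkM n 2 U M)
  (HMinv : forall r v, U r v -> mat_inverse n (M r v) (Minv r v))
  (HMr : pdM_rho n U M Mr) (HMv : pdM_v n U M Mv)
  (X Xinv Xr Xv : R -> R -> Mat)
  (HX : CkM n 2 U X)
  (HXinv_inv : forall r v, U r v -> mat_inverse n (X r v) (Xinv r v))
  (HXinv : CkM n 1 U Xinv)
  (HXr : pdM_rho n U X Xr) (HXv : pdM_v n U X Xv)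
  (HBM_rho : forall r v, U r v ->
     mat_eq n
       (mat_cscale (phi r v)
          (mat_add (Xr r v) (mat_mul n (mat_mul n (Minv r v) (Mr r v)) (X r v))))
       (Xv r v))
  (HBM_v : forall r v, U r v ->
     mat_eq n
       (mat_cscale (phi r v)
          (mat_add (Xv r v) (mat_mul n (mat_mul n (Minv r v) (Mv r v)) (X r v))))
       (mat_rscale (- sigma) (Xr r v))) :
  exists P Q : R -> R -> Mat,
    pdM_rho n U (fun r v => mat_rscale (- sigma * r) (mat_mul n (Minv r v) (Mr r v))) P /\
    pdM_v n U (fun r v => mat_rscale r (mat_mul n (Minv r v) (Mv r v))) Q /\
    (forall r v, U r v -> mat_eq n (mat_sub (P r v) (Q r v)) mat_zero).
Proof.
  assert (Hss : sigma * sigma = 1) by (destruct Hsigma; subst; ring).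
  assert (Hpp : pm * pm = 1) by (destruct Hpm; subst; ring).
  assert (Hs2 : Cmul (RtoC sigma) (RtoC sigma) = C1) by (unfold C1; rewrite <- RtoC_mul, Hss; auto).
  assert (HR0 : forall r v, U r v -> rr0 (phi r v) (RtoC sigma) (RtoC r) (Csub omega (RtoC v)) = C0).
  { intros r v Hin. pose proof (HUhalf r v Hin) as Hr.
    assert (Hrho : Cmul (RtoC r) (phi r v) =
       Cadd (Cmul (Copp (RtoC sigma)) (Csub omega (RtoC v))) (Cmul (RtoC pm) (sq r v))).
    { rewrite Hphi_form by auto. rewrite !Cscal_mul. rewrite <- RtoC_opp.
      transitivity (Cmul (Cmul (RtoC r) (RtoC (/ r)))
        (Cadd (Cmul (RtoC (- sigma)) (Csub omega (RtoC v))) (Cmul (RtoC pm) (sq r v)))).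
      ring. rewrite <- RtoC_mul, Rinv_r by lra. fold C1. ring. }
    apply (Cmul_cancel (RtoC r)). { apply RtoC_nz; lra. }
    assert (Hy : Csub (Cmul (sq r v) (sq r v))
                 (Cadd (Cmul (Csub omega (RtoC v)) (Csub omega (RtoC v)))
                       (Cmul (RtoC sigma) (Cmul (RtoC r) (RtoC r)))) = C0).
    { pose proof (Hsq r v Hin) as E. unfold Csq in E. rewrite E.
      replace (RtoC (sigma * r ^ 2)) with (Cmul (RtoC sigma) (Cmul (RtoC r) (RtoC r)))
        by (apply Cx_eq; simpl; ring). ring. }
    assert (HP : Csub (Cmul (RtoC pm) (RtoC pm)) C1 = C0)
      by (unfold C1; rewrite <- RtoC_mul, Hpp; ring).
    assert (HS : Csub C1 (Cmul (RtoC sigma) (RtoC sigma)) = C0) by (rewrite Hs2; ring).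
    set (c := Csub omega (RtoC v)) in *. set (y := sq r v) in *. set (f := phi r v) in *.
    set (rho := RtoC r) in *. set (P := RtoC pm) in *. set (s := RtoC sigma) in *.
    transitivity (Csub (Cadd (Cmul (Cmul rho f) (Cmul rho f)) (Cmul (Cadd s s) (Cmul c (Cmul rho f))))
                       (Cmul s (Cmul rho rho))).
    { unfold rr0; ring. }
    rewrite Hrho.
    transitivity (Cadd (Cmul (Cmul P P) (Csub (Cmul y y) (Cadd (Cmul c c) (Cmul s (Cmul rho rho)))))
                  (Cadd (Cmul (Csub (Cmul P P) C1) (Cadd (Cmul c c) (Cmul s (Cmul rho rho))))
                        (Cmul (Csub C1 (Cmul s s)) (Cmul c c)))).
    { ring. }
    rewrite Hy, HP, HS. ring. }
  set (Psi := fun t w => Cadd (Cmul (RtoC sigma) (phi t w))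
                (Cmul (Cadd (RtoC (1 / t)) (RtoC (1 / t))) (Csub omega (RtoC w)))).
  assert (HPsi : forall t w, U t w -> Cmul (Psi t w) (phi t w) = C1).
  { intros t w Hin. pose proof (HUhalf t w Hin) as Ht.
    assert (Hir : Csub (Cmul (RtoC (1 / t)) (RtoC t)) C1 = C0).
    { unfold C1. rewrite <- RtoC_mul. replace (1 / t * t) with 1 by (field; lra). ring. }
    assert (HS : Csub (Cmul (RtoC sigma) (RtoC sigma)) C1 = C0) by (rewrite Hs2; ring).
    pose proof (HR0 t w Hin) as H0. unfold Psi.
    set (c := Csub omega (RtoC w)) in *. set (f := phi t w) in *.
    set (rho := RtoC t) in *. set (ir := RtoC (1 / t)) in *. set (s := RtoC sigma) in *.
    transitivity (Cadd C1 (Cadd (Cmul (Cmul s ir) (rr0 f s rho c))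
      (Cadd (Cmul (Csub (Cmul ir rho) C1) (Csub (Cmul s s) (Cmul s (Cmul f f))))
            (Cmul (Csub (Cmul s s) C1) (Csub C1 (Cmul (Cadd ir ir) (Cmul c f))))))).
    { unfold rr0; ring. }
    rewrite H0, Hir, HS. ring. }
  assert (Hpt : forall r v, U r v -> exists p q : Mat,
     md n (fun t => mat_rscale (- sigma * t) (mat_mul n (Minv t v) (Mr t v))) r p /\
     md n (fun t => mat_rscale r (mat_mul n (Minv r t) (Mv r t))) v q /\
     mat_eq n (mat_sub p q) mat_zero).
  { intros r v Hin.
    pose proof (HUhalf r v Hin) as Hr.
    destruct (HUopen r v Hin) as [d [Hd Hball]].
    assert (Hline_r : forall t, Rabs (t - r) < d -> U t v).
    { intros t Ht. apply Hball; auto. unfold Rminus; rewrite Rplus_opp_r, Rabs_R0; lra. }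
    assert (Hline_v : forall t, Rabs (t - v) < d -> U r t).
    { intros t Ht. apply Hball; auto. unfold Rminus; rewrite Rplus_opp_r, Rabs_R0; lra. }
    destruct (C1_info_C U phi (Hphi_smooth 1%nat) r v Hin) as [fr [fv [Dfr Dfv]]].
    destruct (C2_info_M n U X Xr Xv HUopen HX HXr HXv r v Hin)
      as [Xrr [W [Xvv [DXrr [DXrv [DXvr DXvv]]]]]].
    pose proof (pdM_rho_md n U X Xr HXr r v Hin) as DXr.
    pose proof (pdM_v_md n U X Xv HXv r v Hin) as DXv.
    destruct (C2_info_M n U M Mr Mv HUopen HM HMr HMv r v Hin) as [Mrr [WM [Mvv [_ [DMrv [DMvr _]]]]]].
    pose proof (pdM_rho_md n U M Mr HMr r v Hin) as DMr.
    pose proof (pdM_v_md n U M Mv HMv r v Hin) as DMv.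
    destruct (C1_info_M n U Xinv HXinv r v Hin) as [Xir [Xiv [DXir DXiv]]].
    destruct (dinv r) as [lr Dlr]; [lra|].
    assert (DPr : exists a, cd (fun t => Psi t v) r a).
    { eexists. unfold Psi. apply cd_add. apply cd_mul. apply cd_const. apply Dfr.
      apply cd_mul. apply cd_add; apply cd_real; apply Dlr. apply cd_const. }
    destruct DPr as [Pr DPr].
    assert (DPv : exists a, cd (fun t => Psi r t) v a).
    { eexists. unfold Psi. apply cd_add. apply cd_mul. apply cd_const. apply Dfv.
      apply cd_mul. apply cd_const. apply cd_sub. apply cd_const. apply cd_real, did. }
    destruct DPv as [Pv DPv].
    assert (HAr : forall t w, U t w -> mat_eq n (mat_mul n (Minv t w) (Mr t w))
        (mat_mul n (mat_sub (mat_cscale (Psi t w) (Xv t w)) (Xr t w)) (Xinv t w))).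
    { intros t w Hin'. apply solve_A with (X := X t w); auto.
      intros i j Hi Hj. pose proof (HBM_rho t w Hin' i j Hi Hj) as E.
      unfold mat_cscale, mat_add in E. unfold mat_sub, mat_cscale.
      apply (lin1 (Psi t w) (phi t w)); auto. }
    assert (HAv : forall t w, U t w -> mat_eq n (mat_mul n (Minv t w) (Mv t w))
        (mat_mul n (mat_sub (mat_cscale (Cmul (Copp (RtoC sigma)) (Psi t w)) (Xr t w)) (Xv t w)) (Xinv t w))).
    { intros t w Hin'. apply solve_A with (X := X t w); auto.
      intros i j Hi Hj. pose proof (HBM_v t w Hin' i j Hi Hj) as E.
      unfold mat_cscale, mat_add, mat_rscale in E. unfold mat_sub, mat_cscale.
      rewrite (lin1 (Psi t w) (phi t w) _ _ _ (HPsi t w Hin') E).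
      rewrite Cscal_mul, RtoC_opp. ring. }
    assert (DA1 : exists Arr, md n (fun t => mat_mul n (Minv t v) (Mr t v)) r Arr).
    { eexists. eapply (md_ext_loc n _ _ _ _ d Hd). intros t Ht. apply HAr, Hline_r; auto.
      apply md_mul. apply md_sub. apply md_cscale. exact DPr. exact DXvr. exact DXrr. exact DXir. }
    assert (DA2 : exists Arv, md n (fun t => mat_mul n (Minv r t) (Mr r t)) v Arv).
    { eexists. eapply (md_ext_loc n _ _ _ _ d Hd). intros t Ht. apply HAr, Hline_v; auto.
      apply md_mul. apply md_sub. apply md_cscale. exact DPv. exact DXvv. exact DXrv. exact DXiv. }
    assert (DA3 : exists Avr, md n (fun t => mat_mul n (Minv t v) (Mv t v)) r Avr).
    { eexists. eapply (md_ext_loc n _ _ _ _ d Hd). intros t Ht. apply HAv, Hline_r; auto.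
      apply md_mul. apply md_sub. apply md_cscale. apply cd_mul. apply cd_const. exact DPr.
      exact DXrr. exact DXvr. exact DXir. }
    assert (DA4 : exists Avv, md n (fun t => mat_mul n (Minv r t) (Mv r t)) v Avv).
    { eexists. eapply (md_ext_loc n _ _ _ _ d Hd). intros t Ht. apply HAv, Hline_v; auto.
      apply md_mul. apply md_sub. apply md_cscale. apply cd_mul. apply cd_const. exact DPv.
      exact DXrv. exact DXvv. exact DXiv. }
    destruct DA1 as [Arr DA1]. destruct DA2 as [Arv DA2].
    destruct DA3 as [Avr DA3]. destruct DA4 as [Avv DA4].
    assert (F1 : mat_eq n (mat_add (mat_mul n (Mr r v) (mat_mul n (Minv r v) (Mv r v)))
                                   (mat_mul n (M r v) Avr)) WM).
    { apply (md_unique n (fun t => mat_mul n (M t v) (mat_mul n (Minv t v) (Mv t v))) r).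
      apply (md_mul n (fun t => M t v) (fun t => mat_mul n (Minv t v) (Mv t v)) r); [exact DMr|exact DA3].
      eapply (md_ext_loc n _ _ _ _ d Hd). intros t Ht. apply inv_mul_cancel, HMinv, Hline_r; auto.
      exact DMvr. }
    assert (F2 : mat_eq n (mat_add (mat_mul n (Mv r v) (mat_mul n (Minv r v) (Mr r v)))
                                   (mat_mul n (M r v) Arv)) WM).
    { apply (md_unique n (fun t => mat_mul n (M r t) (mat_mul n (Minv r t) (Mr r t))) v).
      apply (md_mul n (fun t => M r t) (fun t => mat_mul n (Minv r t) (Mr r t)) v); [exact DMv|exact DA2].
      eapply (md_ext_loc n _ _ _ _ d Hd). intros t Ht. apply inv_mul_cancel, HMinv, Hline_v; auto.
      exact DMrv. }
    set (Ar0 := mat_mul n (Minv r v) (Mr r v)) in *.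
    set (Av0 := mat_mul n (Minv r v) (Mv r v)) in *.
    assert (HMAr : mat_eq n (mat_mul n (M r v) Ar0) (Mr r v)) by (apply inv_mul_cancel; auto).
    assert (HMAv : mat_eq n (mat_mul n (M r v) Av0) (Mv r v)) by (apply inv_mul_cancel; auto).
    assert (Flat : forall i j, (i < n)%nat -> (j < n)%nat ->
      mat_sub (mat_sub Avr Arv) (mat_sub (mat_mul n Av0 Ar0) (mat_mul n Ar0 Av0)) i j = C0).
    { apply (mm_cancel_l n _ (M r v) (Minv r v) (HMinv r v Hin)). intros i j Hi Hj.
      rewrite !mm_sub_r. rewrite <- !(mm_assoc n (M r v)).
      rewrite (mm_congr_l n _ _ Ar0 i j HMAv Hi), (mm_congr_l n _ _ Av0 i j HMAr Hi).
      pose proof (F1 i j Hi Hj) as G1. pose proof (F2 i j Hi Hj) as G2.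
      unfold mat_add in G1, G2.
      transitivity (Csub (Cadd (mat_mul n (Mr r v) Av0 i j) (mat_mul n (M r v) Avr i j))
                         (Cadd (mat_mul n (Mv r v) Ar0 i j) (mat_mul n (M r v) Arv i j))).
      ring. rewrite G1, G2. ring. }
    assert (HE3 : mat_eq n (mat_add (mat_cscale fr (mat_add (Xr r v) (mat_mul n Ar0 (X r v))))
        (mat_cscale (phi r v) (mat_add Xrr (mat_add (mat_mul n Arr (X r v)) (mat_mul n Ar0 (Xr r v)))))) W).
    { apply (md_unique n (fun t => mat_cscale (phi t v) (mat_add (Xr t v) (mat_mul n (mat_mul n (Minv t v) (Mr t v)) (X t v)))) r).
      - apply (md_cscale n (fun t => phi t v) (fun t => mat_add (Xr t v) (mat_mul n (mat_mul n (Minv t v) (Mr t v)) (X t v))) r fr); [exact Dfr|].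
        apply (md_add n (fun t => Xr t v) (fun t => mat_mul n (mat_mul n (Minv t v) (Mr t v)) (X t v)) r); [exact DXrr|].
        apply (md_mul n (fun t => mat_mul n (Minv t v) (Mr t v)) (fun t => X t v) r); [exact DA1|exact DXr].
      - eapply (md_ext_loc n _ _ _ _ d Hd). intros t Ht. apply HBM_rho, Hline_r; auto. exact DXvr. }
    assert (HE1 : mat_eq n (mat_add (mat_cscale fv (mat_add (Xr r v) (mat_mul n Ar0 (X r v))))
        (mat_cscale (phi r v) (mat_add W (mat_add (mat_mul n Arv (X r v)) (mat_mul n Ar0 (Xv r v)))))) Xvv).
    { apply (md_unique n (fun t => mat_cscale (phi r t) (mat_add (Xr r t) (mat_mul n (mat_mul n (Minv r t) (Mr r t)) (X r t)))) v).
      - apply (md_cscale n (fun t => phi r t) (fun t => mat_add (Xr r t) (mat_mul n (mat_mul n (Minv r t) (Mr r t)) (X r t))) v fv); [exact Dfv|].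
        apply (md_add n (fun t => Xr r t) (fun t => mat_mul n (mat_mul n (Minv r t) (Mr r t)) (X r t)) v); [exact DXrv|].
        apply (md_mul n (fun t => mat_mul n (Minv r t) (Mr r t)) (fun t => X r t) v); [exact DA2|exact DXv].
      - eapply (md_ext_loc n _ _ _ _ d Hd). intros t Ht. apply HBM_rho, Hline_v; auto. exact DXvv. }
    assert (HE2 : mat_eq n (mat_add (mat_cscale fr (mat_add (Xv r v) (mat_mul n Av0 (X r v))))
        (mat_cscale (phi r v) (mat_add W (mat_add (mat_mul n Avr (X r v)) (mat_mul n Av0 (Xr r v))))))
        (mat_add (mat_rscale 0 (Xr r v)) (mat_rscale (- sigma) Xrr))).
    { apply (md_unique n (fun t => mat_cscale (phi t v) (mat_add (Xv t v) (mat_mul n (mat_mul n (Minv t v) (Mv t v)) (X t v)))) r).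
      - apply (md_cscale n (fun t => phi t v) (fun t => mat_add (Xv t v) (mat_mul n (mat_mul n (Minv t v) (Mv t v)) (X t v))) r fr); [exact Dfr|].
        apply (md_add n (fun t => Xv t v) (fun t => mat_mul n (mat_mul n (Minv t v) (Mv t v)) (X t v)) r); [exact DXvr|].
        apply (md_mul n (fun t => mat_mul n (Minv t v) (Mv t v)) (fun t => X t v) r); [exact DA3|exact DXr].
      - eapply (md_ext_loc n _ _ _ _ d Hd). intros t Ht. apply HBM_v, Hline_r; auto.
        apply (md_rscale n (fun _ => - sigma) (fun t => Xr t v)); [apply dconst|exact DXrr]. }
    assert (HE4 : mat_eq n (mat_add (mat_cscale fv (mat_add (Xv r v) (mat_mul n Av0 (X r v))))
        (mat_cscale (phi r v) (mat_add Xvv (mat_add (mat_mul n Avv (X r v)) (mat_mul n Av0 (Xv r v))))))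
        (mat_add (mat_rscale 0 (Xr r v)) (mat_rscale (- sigma) W))).
    { apply (md_unique n (fun t => mat_cscale (phi r t) (mat_add (Xv r t) (mat_mul n (mat_mul n (Minv r t) (Mv r t)) (X r t)))) v).
      - apply (md_cscale n (fun t => phi r t) (fun t => mat_add (Xv r t) (mat_mul n (mat_mul n (Minv r t) (Mv r t)) (X r t))) v fv); [exact Dfv|].
        apply (md_add n (fun t => Xv r t) (fun t => mat_mul n (mat_mul n (Minv r t) (Mv r t)) (X r t)) v); [exact DXvv|].
        apply (md_mul n (fun t => mat_mul n (Minv r t) (Mv r t)) (fun t => X r t) v); [exact DA4|exact DXv].
      - eapply (md_ext_loc n _ _ _ _ d Hd). intros t Ht. apply HBM_v, Hline_v; auto.
        apply (md_rscale n (fun _ => - sigma) (fun t => Xr r t)); [apply dconst|exact DXrv]. }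
    set (c := Csub omega (RtoC v)).
    assert (HR1 : rr1 (phi r v) fr (RtoC sigma) (RtoC r) c = C0).
    { assert (D1 : cd (fun t => rr0 (phi t v) (RtoC sigma) (RtoC t) c) r C0).
      { apply (cd_ext_loc _ (fun _ => C0) _ _ d Hd). intros t Ht. apply HR0, Hline_r; auto. apply cd_const. }
      eassert (D2 : cd (fun t => rr0 (phi t v) (RtoC sigma) (RtoC t) c) r _).
      { unfold rr0. apply cd_sub. apply cd_add. apply cd_mul. apply cd_real, did.
        apply cd_mul; exact Dfr. apply cd_mul. apply cd_const. apply cd_mul. apply cd_const. exact Dfr.
        apply cd_mul. apply cd_const. apply cd_real, did. }
      pose proof (cd_unique _ _ _ _ D2 D1) as E. rewrite <- E. unfold rr1, KK. fold C1. ring. }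
    assert (HR2 : rr2 (phi r v) fv (RtoC sigma) (RtoC r) c = C0).
    { assert (D1 : cd (fun t => rr0 (phi r t) (RtoC sigma) (RtoC r) (Csub omega (RtoC t))) v C0).
      { apply (cd_ext_loc _ (fun _ => C0) _ _ d Hd). intros t Ht. apply HR0, Hline_v; auto. apply cd_const. }
      eassert (D2 : cd (fun t => rr0 (phi r t) (RtoC sigma) (RtoC r) (Csub omega (RtoC t))) v _).
      { unfold rr0. apply cd_sub. apply cd_add. apply cd_mul. apply cd_const.
        apply cd_mul; exact Dfv. apply cd_mul. apply cd_const. apply cd_mul.
        apply cd_sub. apply cd_const. apply cd_real, did. exact Dfv.
        apply cd_mul; apply cd_const. }
      pose proof (cd_unique _ _ _ _ D2 D1) as E. rewrite <- E. unfold rr2, KK, c. fold C1. ring. }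
    assert (Hnz : Cmul (Cmul (phi r v) (phi r v)) (KK (phi r v) (RtoC sigma) (RtoC r) c) <> C0).
    { pose proof (HR0 r v Hin) as H0. fold c in H0.
      replace (Cmul (Cmul (phi r v) (phi r v)) (KK (phi r v) (RtoC sigma) (RtoC r) c))
        with (Cmul (phi r v) (Cmul (RtoC r) (Cadd (Csq (phi r v)) (RtoC sigma)))).
      - apply Cmul_nz; [apply Hphi_nz; auto|]. apply Cmul_nz; [apply RtoC_nz; lra|]. apply Hphi_nz2; auto.
      - transitivity (Cadd (Cmul (phi r v) (Cmul (RtoC r) (Cadd (Csq (phi r v)) (RtoC sigma))))
                           (Cmul (phi r v) (rr0 (phi r v) (RtoC sigma) (RtoC r) c))).
        + rewrite H0. ring.
        + unfold rr0, KK, Csq. ring. }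
    set (S := mat_add (mat_cscale (RtoC sigma) Ar0)
                (mat_add (mat_cscale (Cmul (RtoC sigma) (RtoC r)) Arr) (mat_cscale (RtoC r) Avv))).
    assert (HSX : forall i j, (i < n)%nat -> (j < n)%nat -> mat_mul n S (X r v) i j = C0).
    { intros i j Hi Hj.
      assert (K := key_alg (phi r v) fr fv (RtoC sigma) (RtoC r) c
         (Xr r v i j) (Xv r v i j) (mat_mul n Ar0 (X r v) i j) (mat_mul n Av0 (X r v) i j)
         (W i j) (Xrr i j) (Xvv i j)
         (mat_mul n Arr (X r v) i j) (mat_mul n Arv (X r v) i j)
         (mat_mul n Avr (X r v) i j) (mat_mul n Avv (X r v) i j)
         (mat_mul n Ar0 (Xr r v) i j) (mat_mul n Ar0 (Xv r v) i j)
         (mat_mul n Ar0 (mat_mul n Av0 (X r v)) i j)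
         (mat_mul n Av0 (Xr r v) i j) (mat_mul n Av0 (Xv r v) i j)
         (mat_mul n Av0 (mat_mul n Ar0 (X r v)) i j)).
      assert (sub0 : forall a b : Cx, a = b -> Csub a b = C0) by (intros a b ->; ring).
      assert (Hk : Cadd (Cmul (RtoC sigma) (mat_mul n Ar0 (X r v) i j))
                   (Cadd (Cmul (RtoC sigma) (Cmul (RtoC r) (mat_mul n Arr (X r v) i j)))
                         (Cmul (RtoC r) (mat_mul n Avv (X r v) i j))) = C0).
      { eapply Cmul_cancel; [exact Hnz|]. apply K.
        - unfold ex1. apply sub0. exact (HE1 i j Hi Hj).
        - unfold ex2. apply sub0. etransitivity; [exact (HE2 i j Hi Hj)|]. unfold mat_add, mat_rscale.
          rewrite !Cscal_mul, RtoC_opp, RtoC_0. ring.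
        - unfold ex3. apply sub0. exact (HE3 i j Hi Hj).
        - unfold ex4. apply sub0. etransitivity; [exact (HE4 i j Hi Hj)|]. unfold mat_add, mat_rscale.
          rewrite !Cscal_mul, RtoC_opp, RtoC_0. ring.
        - unfold ee1. apply sub0. exact (HBM_rho r v Hin i j Hi Hj).
        - unfold ee2. apply sub0. etransitivity; [exact (HBM_v r v Hin i j Hi Hj)|]. unfold mat_rscale.
          rewrite Cscal_mul, RtoC_opp. ring.
        - unfold ee4. apply sub0. pose proof (mm_congr_r n Ar0 _ _ i j (HBM_v r v Hin) Hj) as E.
          rewrite mm_cscale_r, mm_add_r, mm_rscale_r in E. etransitivity; [exact E|]. rewrite RtoC_opp. ring.
        - unfold ee5. apply sub0. pose proof (mm_congr_r n Av0 _ _ i j (HBM_rho r v Hin) Hj) as E.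
          rewrite mm_cscale_r, mm_add_r in E. exact E.
        - unfold eef. rewrite <- !mm_assoc. rewrite <- !mm_sub_l.
          unfold mat_mul at 1. apply Csum_zero. intros k Hk. rewrite Flat by auto. ring.
        - apply HR0; auto.
        - exact HR1.
        - exact HR2. }
      unfold S. rewrite !mm_add_l, !mm_cscale_l. rewrite <- Hk. ring. }
    assert (HS : forall i j, (i < n)%nat -> (j < n)%nat -> S i j = C0).
    { apply (mm_cancel_r n S (X r v) (Xinv r v) (HXinv_inv r v Hin)). exact HSX. }
    exists (mat_add (mat_rscale (- sigma) Ar0) (mat_rscale (- sigma * r) Arr)).
    exists (mat_add (mat_rscale 0 Av0) (mat_rscale r Avv)).
    split; [|split].
    - apply (md_rscale n (fun t => - sigma * t) (fun t => mat_mul n (Minv t v) (Mr t v)) r (- sigma)); [|exact DA1].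
      eapply dval. apply dmult; [apply dconst|apply did]. cbv beta. ring.
    - apply (md_rscale n (fun _ => r) (fun t => mat_mul n (Minv r t) (Mv r t)) v 0); [apply dconst|exact DA4].
    - intros i j Hi Hj. pose proof (HS i j Hi Hj) as E.
      unfold S, mat_add, mat_cscale in E.
      unfold mat_sub, mat_add, mat_rscale, mat_zero. rewrite !Cscal_mul.
      transitivity (Copp (Cadd (Cmul (RtoC sigma) (Ar0 i j))
         (Cadd (Cmul (Cmul (RtoC sigma) (RtoC r)) (Arr i j)) (Cmul (RtoC r) (Avv i j))))).
      + rewrite RtoC_0, RtoC_opp, RtoC_mul, RtoC_opp. ring.
      + rewrite E. ring. }
  assert (H' : forall r v, exists pq : Mat * Mat, U r v ->
     md n (fun t => mat_rscale (- sigma * t) (mat_mul n (Minv t v) (Mr t v))) r (fst pq) /\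
     md n (fun t => mat_rscale r (mat_mul n (Minv r t) (Mv r t))) v (snd pq) /\
     mat_eq n (mat_sub (fst pq) (snd pq)) mat_zero).
  { intros r v. destruct (classic (U r v)) as [Hin|Hout].
    - destruct (Hpt r v Hin) as [p [q Hpq]]. exists (p, q). intros _; exact Hpq.
    - exists (mat_zero, mat_zero). intros Hin; contradiction. }
  exists (fun r v => fst (proj1_sig (constructive_indefinite_description _ (H' r v)))).
  exists (fun r v => snd (proj1_sig (constructive_indefinite_description _ (H' r v)))).
  split; [|split].
  - apply md_pdM_rho. intros r v Hin.
    destruct (constructive_indefinite_description _ (H' r v)) as [pq Hpq]; simpl. apply Hpq; auto.
  - apply md_pdM_v. intros r v Hin.
    destruct (constructive_indefinite_description _ (H' r v)) as [pq Hpq]; simpl. apply Hpq; auto.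
  - intros r v Hin.
    destruct (constructive_indefinite_description _ (H' r v)) as [pq Hpq]; simpl. apply Hpq; auto.
Qed.
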